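(* Let $R$ be a ring. Then $R$ is a GSWNC ring if and only if for every non-invertible $a \in R$, at least one of $a - a^2$ and $a + a^2$ is nilpotent.
   Context: All rings are associative with identity. An element $a$ of a ring is strongly weakly nil-clean if there exist an idempotent $e$ and a nilpotent $q$ with $eq = qe$ such that $a = q + e$ or $a = q - e$. A ring is GSWNC if every non-invertible element is strongly weakly nil-clean. *)

(* Defs.v *)
From mathcomp Require Import all_boot all_algebra.
Set Implicit Arguments. Unset Strict Implicit. Unset Printing Implicit Defensive.
Import GRing.Theory.
Local Open Scope ring_scope.

Definition idempotent_el {R : pzRingType} (e : R) : Prop := e * e = e.
Definition nilpotent_el {R : pzRingType} (q : R) : Prop := exists n : nat, q ^+ n = 0.
Definition invertible_el {R : pzRingType} (a : R) : Prop :=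
  exists b : R, a * b = 1 /\ b * a = 1.

Definition strongly_weakly_nil_clean {R : pzRingType} (a : R) : Prop :=
  exists e q : R, idempotent_el e /\ nilpotent_el q /\ e * q = q * e /\
    (a = q + e \/ a = q - e).

Definition GSWNC (R : pzRingType) : Prop :=
  forall a : R, ~ invertible_el a -> strongly_weakly_nil_clean a.

(* Main.v *)
Require Import Defs.
From HB Require Import structures.
From mathcomp Require Import all_boot all_algebra.
From mathcomp Require Import ring.
Import GRing.Theory.
Local Open Scope ring_scope.

Ltac commt := repeat first
  [ assumption | apply: commr_refl | apply: commr1 | apply: commr0 | apply: commr_nat
  | apply: commrD | apply: commrB | apply: commrM | apply: commrX | apply: commrN ].

Section S.
Variable R : pzRingType.
Hypothesis R1 : (1:R) != 0.
Definition Rnz : Type := R.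
HB.instance Definition _ := GRing.PzRing.on Rnz.
HB.instance Definition _ := GRing.PzSemiRing_isNonZero.Build Rnz R1.
Lemma cf (s : Rnz) : commr_rmorph (intmul (1:Rnz)) s.
Proof. move=> x; apply: commrMz; exact: commr1. Qed.
Lemma id1 (u : Rnz) : let u' := u^+2 * (3%:R - 2%:R * u) in
  u' - u'^+2 = (u - u^+2)^+2 * ((3%:R - 2%:R*u) * (1 + 2%:R*u)).
Proof.
have E : let X : {poly int} := 'X in let X' := X^+2 * (3%:R - 2%:R * X) in
  X' - X'^+2 = (X - X^+2)^+2 * ((3%:R - 2%:R*X) * (1 + 2%:R*X)).
  rewrite /=. ring.
have := congr1 (horner_morph (cf u)) E.
by rewrite /= !(rmorphB, rmorphM, rmorphXn, rmorphD, rmorph_nat, rmorph1) /= horner_morphX.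
Qed.
Lemma id2 (u : Rnz) : let u' := u^+2 * (3%:R - 2%:R * u) in
  u - u' = (u - u^+2) * (1 - 2%:R*u).
Proof.
have E : let X : {poly int} := 'X in let X' := X^+2 * (3%:R - 2%:R * X) in
  X - X' = (X - X^+2) * (1 - 2%:R*X).
  rewrite /=. ring.
have := congr1 (horner_morph (cf u)) E.
by rewrite /= !(rmorphB, rmorphM, rmorphXn, rmorphD, rmorph_nat, rmorph1) /= horner_morphX.
Qed.

Lemma iter_step (a : Rnz) (r : nat) : exists s w v : Rnz,
  [/\ GRing.comm a s, GRing.comm a w, GRing.comm a v,
      s - s^+2 = (a - a^+2)^+(2^r) * w & a - s = (a - a^+2) * v].
Proof.
set p := a - a^+2.
have cap : GRing.comm a p by rewrite /p; commt.
elim: r => [|r [s [w [v [cs cw cv E1 E2]]]]].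
  exists a, 1, 0; split; commt; first by rewrite expn0 expr1 mulr1.
  by rewrite mulr0 subrr.
have cps : forall x, GRing.comm a x -> GRing.comm p x.
  by move=> x cx; rewrite /p; apply: commr_sym; commt; apply: commr_sym.
exists (s^+2 * (3%:R - 2%:R * s)), (w^+2 * ((3%:R - 2%:R*s) * (1 + 2%:R*s))),
  (v + p^+(2^r).-1 * w * (1 - 2%:R*s)); split; try by commt.
- rewrite id1 E1 mulrA; congr (_ * _).
  rewrite exprMn_comm; last by apply: commr_sym; apply: commrX; apply: commr_sym; apply: cps.
  by rewrite -exprM expnSr.
- have -> : a - s^+2 * (3%:R - 2%:R * s) = (a - s) + (s - s^+2 * (3%:R - 2%:R * s)).
    by rewrite addrA subrK.
  rewrite id2 E1 E2 [RHS]mulrDr; congr (_ + _).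
  by rewrite -{1}(prednK (expn_gt0 2 r)) exprS !mulrA.
Qed.

Lemma lift (a : Rnz) : nilpotent_el (a - a^+2) ->
  exists e q : Rnz, idempotent_el e /\ nilpotent_el q /\ e * q = q * e /\ a = q + e.
Proof.
move=> [n Hn].
have [s [w [v [cs cw cv E1 E2]]]] := iter_step a n.
set p := a - a^+2 in Hn E1 E2.
have cps : forall x, GRing.comm a x -> GRing.comm p x.
  by move=> x cx; rewrite /p; apply: commr_sym; commt; apply: commr_sym.
exists s, (a - s); split; last split; last split.
- move: E1; rewrite -(subnK (ltnW (ltn_expl n (isT : (1 < 2)%N)))) exprD Hn mulr0 mul0r.
  by move/eqP; rewrite subr_eq0 => /eqP E; rewrite /idempotent_el -expr2 -E.
- exists n; rewrite E2 exprMn_comm; first by rewrite Hn mul0r. exact: cps.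
- exact: (commrB (commr_sym cs) (commr_refl s)).
- by rewrite -addrA addNr addr0.
Qed.
End S.

Lemma lift_gen (R : pzRingType) (a : R) : nilpotent_el (a - a^+2) ->
  exists e q : R, idempotent_el e /\ nilpotent_el q /\ e * q = q * e /\ a = q + e.
Proof.
case: (eqVneq (1:R) 0) => [R0|R1].
  have z : forall x : R, x = 0 by move=> x; rewrite -(mul1r x) R0 mul0r.
  move=> _; exists 0, 0; rewrite /idempotent_el /nilpotent_el; split; first by rewrite mulr0.
  split; first by exists 1%N; rewrite expr1.
  by split; [rewrite mulr0 | rewrite (z a) addr0].
exact: (@lift R R1 a).
Qed.

Lemma nil_mul (R : pzRingType) (q x : R) : GRing.comm q x -> nilpotent_el q -> nilpotent_el (q * x).
Proof. by move=> c [n Hn]; exists n; rewrite exprMn_comm // Hn mul0r. Qed.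

Lemma f1 (R : pzRingType) (e q : R) : e * e = e -> e * q = q * e ->
  (q + e) - (q + e)^+2 = q * (1 - q - e - e).
Proof.
move=> He Hc.
rewrite expr2 !mulrDr !mulrDl He Hc mulr1 !mulrN !opprD !addrA.
by rewrite (addrC q e) -!addrA addrC !addrA subrK. Qed.

Lemma f2 (R : pzRingType) (e q : R) : e * e = e -> e * q = q * e ->
  (q - e) + (q - e)^+2 = q * (1 + q - e - e).
Proof.
move=> He Hc.
rewrite expr2 !mulrDr !mulrDl !mulrN !mulNr opprK He Hc mulr1 !addrA.
by rewrite [q - e]addrC -!addrA addrC !addrA addrK. Qed.


Theorem proposition2p11 (R : pzRingType) :
  GSWNC R <->
  (forall a : R, ~ invertible_el a ->
     nilpotent_el (a - a ^+ 2) \/ nilpotent_el (a + a ^+ 2)).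
Proof.
split.
- move=> H a /H [e [q [He [Hq [Hc [-> | ->]]]]]].
  + left; rewrite f1 //; apply: nil_mul => //.
    rewrite /GRing.comm. apply: commrB; [apply: commrB; [apply: commrB|]|]; rewrite /GRing.comm //.
    * exact: commr1.
  + right; rewrite f2 //; apply: nil_mul => //.
    rewrite /GRing.comm. apply: commrB; [apply: commrB; [apply: commrD|]|]; rewrite /GRing.comm //.
    * exact: commr1.
- move=> H a /H [N|N].
  + have [e [q [He [Hq [Hc E]]]]] := @lift_gen _ _ N.
    by exists e, q; split => //; split => //; split => //; left.
  + have N' : nilpotent_el ((- a) - (- a)^+2).
      case: N => n Hn; exists n.
      by rewrite sqrrN -opprD exprNn Hn mulr0.
    have [e [q [He [Hq [Hc E]]]]] := @lift_gen _ _ N'.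
    exists e, (- q); split => //; split.
      by case: Hq => n Hn; exists n; rewrite exprNn Hn mulr0.
    split; first by rewrite mulrN mulNr Hc.
    by right; rewrite -opprD -E opprK.
Qed.
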